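(* Let a motion digraph $\mathcal{M}=(\mathbb{Z}_\varkappa,\mathcal{W})$, an infection probability $\alpha\in[0,1]$ and a recovery probability $\beta\in[0,1]$ be given, and consider the agent-based SIR model with $N$ mobile agents described below. Then there exists a stochastic digraph $\boldsymbol{\mathcal{SIRM}}$ whose stochastic directed paths are in one-to-one correspondence with the trajectories of the agent-based SIR model with mobile agents.
   Context: Agent-based SIR model: agent $i\in\{1,\dots,N\}$ has state $(\sigma_i,\varpi_i)$ with $\sigma_i\in\{1,2,3\}$ (susceptible, infected, recovered) and position $\varpi_i\in\mathbb{Z}_\varkappa$. Positions evolve by $\varpi_i^+\in\mathcal{N}^o(\varpi_i)$, where $\mathcal{N}^o(\varpi)=\{y:(\varpi,y)\in\mathcal{W}\}$ is the out-neighborhood in $\mathcal{M}$ (the choice among out-neighbors is arbitrary, i.e., nondeterministic). Epidemic states evolve by $\sigma_i^+=G_i(\sigma,\varpi,u_i,v_i)$ with $G_i=1$ if $\sigma_i=1$ and there is no $j\neq i$ with $\varpi_i=\varpi_j$, $\sigma_j=2$ and $[u_i]_j=2$; $G_i=2$ if $\sigma_i=1$ and such a $j$ exists; $G_i=v_i+1$ if $\sigma_i=2$; $G_i=3$ if $\sigma_i=3$. Here $(\boldsymbol{u_i})_k\in\{1,2\}^N$ and $(\boldsymbol{v_i})_k\in\{1,2\}$, $i=1,\dots,N$, are sequences of i.i.d. random variables with $\mathbb{P}([(\boldsymbol{u_i})_k]_j=2)=\alpha$ for each $j$ and $\mathbb{P}((\boldsymbol{v_i})_k=2)=\beta$ (the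 infection events being independent). A stochastic digraph is a triple $(\mathbb{Z}_{n},\{\mathcal{E}_s\}_{s=1}^h,\mu)$ with $\mathcal{E}_s\subset\mathbb{Z}_n\times\mathbb{Z}_n$ and $\mu$ the common distribution of an i.i.d. sequence $\boldsymbol{w}_k:\Omega\to\mathbb{Z}_h$ on a probability space; with $H(x,w)=\{y:(x,y)\in\mathcal{E}_w\}$, a stochastic directed path from $x$ is a map $\omega\mapsto\{\boldsymbol{x}_k(\omega)\}_{k}$ with $\boldsymbol{x}_0=x$, $\boldsymbol{x}_{k+1}(\omega)\in H(\boldsymbol{x}_k(\omega),\boldsymbol{w}_k(\omega))$, and $\boldsymbol{x}_{k+1}$ measurable with respect to $\sigma(\boldsymbol{w}_0,\dots,\boldsymbol{w}_k)$. *)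

(* Defs.v *)
From HB Require Import structures.
From mathcomp Require Import all_boot all_order all_algebra.
From mathcomp Require Import all_classical all_reals.
From mathcomp Require Import ereal measure probability.

Set Implicit Arguments.
Unset Strict Implicit.
Unset Printing Implicit Defensive.

Import Order.TTheory GRing.Theory Num.Theory.
Local Open Scope classical_set_scope.
Local Open Scope ring_scope.

(* Epidemic states sigma_i in {1,2,3} are encoded as 'I_3:
   ord 0 = 1 (susceptible), ord 1 = 2 (infected), ord 2 = 3 (recovered). *)
Definition Sus : 'I_3 := @Ordinal 3 0 isT.
Definition Inf : 'I_3 := @Ordinal 3 1 isT.
Definition Rec : 'I_3 := @Ordinal 3 2 isT.

Definition sir_state (N kappa : nat) : finType :=
  ({ffun 'I_N -> 'I_3} * {ffun 'I_N -> 'I_kappa})%type.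

(* Noise at one time step: (u_i)_i with u_i in {1,2}^N and (v_i)_i with v_i in {1,2};
   the boolean 'true' encodes the value 2. *)
Definition sir_noise (N : nat) : finType :=
  ({ffun 'I_N -> {ffun 'I_N -> bool}} * {ffun 'I_N -> bool})%type.

Definition G (N kappa : nat) (i : 'I_N) (sigma : {ffun 'I_N -> 'I_3})
    (varpi : {ffun 'I_N -> 'I_kappa}) (ui : {ffun 'I_N -> bool}) (vi : bool) : 'I_3 :=
  if sigma i == Sus then
    (if [exists j, [&& j != i, varpi i == varpi j, sigma j == Inf & ui j]]
     then Inf else Sus)
  else if sigma i == Inf then (if vi then Rec else Inf)
  else Rec.

Section Prob.
Context {R : realType} {d : measure_display} {Omega : measurableType d}.
Variable P : probability Omega R.

Definition fin_rv (T : finType) (Z : Omega -> T) : Prop :=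
  forall a : T, measurable (Z @^-1` [set a]).

Definition mutually_indep (I : eqType) (T : finType) (Y : I -> Omega -> T) : Prop :=
  forall (s : seq I) (b : I -> T), uniq s ->
    P (\bigcap_(i in [set` s]) (Y i @^-1` [set b i])) =
    (\prod_(i <- s) P (Y i @^-1` [set b i]))%E.

(* sigma(Z_0, ..., Z_k): for finite-valued Z_i these are exactly the preimages
   of subsets of T^(k+1) under omega |-> (Z_0 omega, ..., Z_k omega). *)
Definition sigma_gen (T : finType) (Z : nat -> Omega -> T) (k : nat) : set (set Omega) :=
  [set A | exists B : {set {ffun 'I_k.+1 -> T}},
             A = [set om | [ffun i : 'I_k.+1 => Z i om] \in B]].

Definition measurable_wrt (T : finType) (F : set (set Omega)) (X : Omega -> T) : Prop :=
  forall y : T, F [set om | X om = y].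

Definition prob_distr (h : nat) (mu : {ffun 'I_h -> R}) : Prop :=
  (forall s, 0 <= mu s) /\ \sum_(s < h) mu s = 1.

Definition iid_with_law (h : nat) (w : nat -> Omega -> 'I_h) (mu : {ffun 'I_h -> R}) : Prop :=
  (forall k, fin_rv (w k)) /\ mutually_indep w /\
  (forall k s, P (w k @^-1` [set s]) = (mu s)%:E).

Definition stoch_path (n h : nat) (E : 'I_h -> rel 'I_n) (w : nat -> Omega -> 'I_h)
    (x0 : 'I_n) (x : nat -> Omega -> 'I_n) : Prop :=
  (forall om, x 0%N om = x0) /\
  (forall k om, E (w k om) (x k om) (x k.+1 om)) /\
  (forall k, measurable_wrt (sigma_gen w k) (x k.+1)).

(* Positions evolve nondeterministically inside out-neighbourhoods; as for
   stochastic paths, the state at time k+1 must be determined by the noise up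
   to time k (measurable w.r.t. sigma((u,v)_0, ..., (u,v)_k)). *)
Definition sir_trajectory (N kappa : nat) (W : rel 'I_kappa)
    (U : nat -> Omega -> {ffun 'I_N -> {ffun 'I_N -> bool}})
    (V : nat -> Omega -> {ffun 'I_N -> bool})
    (s0 : sir_state N kappa) (X : nat -> Omega -> sir_state N kappa) : Prop :=
  (forall om, X 0%N om = s0) /\
  (forall k om i, (X k.+1 om).1 i = G i (X k om).1 (X k om).2 (U k om i) (V k om i)) /\
  (forall k om i, W ((X k om).2 i) ((X k.+1 om).2 i)) /\
  (forall k, measurable_wrt (sigma_gen (fun k om => (U k om, V k om) : sir_noise N) k)
                            (X k.+1)).

Definition sir_bits (N : nat)
    (U : nat -> Omega -> {ffun 'I_N -> {ffun 'I_N -> bool}})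
    (V : nat -> Omega -> {ffun 'I_N -> bool})
    (idx : (nat * (('I_N * 'I_N) + 'I_N))%type) : Omega -> bool :=
  match idx with
  | (k, inl (i, j)) => fun om => U k om i j
  | (k, inr i) => fun om => V k om i
  end.

Definition sir_noise_assumptions (N : nat) (alpha beta : R)
    (U : nat -> Omega -> {ffun 'I_N -> {ffun 'I_N -> bool}})
    (V : nat -> Omega -> {ffun 'I_N -> bool}) : Prop :=
  (forall idx, fin_rv (sir_bits U V idx)) /\
  mutually_indep (sir_bits U V) /\
  (forall k i j, P ((fun om => U k om i j) @^-1` [set true]) = alpha%:E) /\
  (forall k i, P ((fun om => V k om i) @^-1` [set true]) = beta%:E).

End Prob.

(* Main.v *)
Require Import Defs.
From HB Require Import structures.
From mathcomp Require Import all_boot all_order all_algebra.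
From mathcomp Require Import all_classical all_reals.
From mathcomp Require Import ereal measure probability.
Import Order.TTheory GRing.Theory Num.Theory.
Local Open Scope classical_set_scope.
Local Open Scope ring_scope.

Definition Tb (N : nat) : finType := (('I_N * 'I_N) + 'I_N)%type.
Definition bv {N : nat} (z : sir_noise N) (x : Tb N) : bool :=
  match x with inl (i, j) => z.1 i j | inr i => z.2 i end.
Definition qb {R : realType} (alpha beta : R) {N : nat} (x : Tb N) (b : bool) : R :=
  match x with inl _ => if b then alpha else 1 - alpha
             | inr _ => if b then beta else 1 - beta end.

Lemma bit_law (R : realType) (d : measure_display) (Omega : measurableType d)
    (P : probability Omega R) (N : nat) (alpha beta : R)
    (U : nat -> Omega -> {ffun 'I_N -> {ffun 'I_N -> bool}})
    (V : nat -> Omega -> {ffun 'I_N -> bool}) :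
  sir_noise_assumptions P alpha beta U V ->
  forall k (x : Tb N) b, P (sir_bits U V (k, x) @^-1` [set b]) = (qb alpha beta x b)%:E.
Proof.
move=> [hm [hi [ha hb]]] k x b.
have hC : forall Y : Omega -> bool, measurable (Y @^-1` [set true]) ->
   Y @^-1` [set false] = ~` (Y @^-1` [set true]).
  move=> Y _; apply/seteqP; split => om /=.
    by move=> -> .
  by case: (Y om).
case: x => [[i j]|i]; case: b => /=.
- exact: ha.
- rewrite hC; last exact: (hm (k, inl (i, j)) true).
  by rewrite probability_setC ?ha ?EFinB //; exact: (hm (k, inl (i, j)) true).
- exact: hb.
- rewrite hC; last exact: (hm (k, inr i) true).
  by rewrite probability_setC ?hb ?EFinB //; exact: (hm (k, inr i) true).
Qed.

Definition Lst (N : nat) (ts : seq nat) : seq (nat * Tb N) :=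
  [seq (k, x) | k <- ts, x <- enum (Tb N)].

Lemma set_eq {d : measure_display} {Omega : measurableType d} {N : nat}
    (U : nat -> Omega -> {ffun 'I_N -> {ffun 'I_N -> bool}})
    (V : nat -> Omega -> {ffun 'I_N -> bool}) (ts : seq nat) (zf : nat -> sir_noise N) :
  \bigcap_(k in [set` ts]) [set om | (U k om, V k om) = zf k] =
  \bigcap_(idx in [set` Lst N ts]) (sir_bits U V idx @^-1` [set bv (zf idx.1) idx.2]).
Proof.
  apply/seteqP; split => om /= H.
  - move=> [k x] /= /allpairsP [[k' x'] /= [hk _ [-> ->]]].
    have E := H k' hk; case: x' => [[i j]|i]; rewrite /= -E //.
  - move=> k hk; case E : (zf k) => [u v].
    have hx : forall x : Tb N, sir_bits U V (k, x) om = bv (zf k) x.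
      move=> x; apply: (H (k, x)) => /=.
      by apply: (allpairs_f (fun a b => (a, b))) => //; rewrite mem_enum.
    congr pair; apply/ffunP => i.
      apply/ffunP => j; have := hx (inl (i, j)); by rewrite E.
    have := hx (inr i); by rewrite E.
Qed.

Lemma key_law (R : realType) (d : measure_display) (Omega : measurableType d)
    (P : probability Omega R) (N : nat) (alpha beta : R)
    (U : nat -> Omega -> {ffun 'I_N -> {ffun 'I_N -> bool}})
    (V : nat -> Omega -> {ffun 'I_N -> bool}) :
  sir_noise_assumptions P alpha beta U V ->
  forall (ts : seq nat) (zf : nat -> sir_noise N), uniq ts ->
  P (\bigcap_(k in [set` ts]) [set om | (U k om, V k om) = zf k]) =
  (\prod_(k <- ts) (\prod_(x : Tb N) qb alpha beta x (bv (zf k) x))%:E)%E.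
Proof.
move=> hUV ts zf uts.
have hi := hUV.2.1.
have uL : uniq (Lst N ts).
  apply: allpairs_uniq => //; first exact: enum_uniq.
  by move=> [a1 a2] [b1 b2] _ _ /= [-> ->].
rewrite set_eq (hi _ _ uL) big_allpairs; apply: eq_bigr => k _.
rewrite big_enum /= -prodEFin; apply: eq_bigr => x _.
by rewrite (@bit_law R d Omega P N alpha beta U V hUV).
Qed.

Lemma single_meas (R : realType) (d : measure_display) (Omega : measurableType d)
    (P : probability Omega R) (N : nat) (alpha beta : R)
    (U : nat -> Omega -> {ffun 'I_N -> {ffun 'I_N -> bool}})
    (V : nat -> Omega -> {ffun 'I_N -> bool}) :
  sir_noise_assumptions P alpha beta U V ->
  forall k (z : sir_noise N), measurable [set om | (U k om, V k om) = z] /\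
    P [set om | (U k om, V k om) = z] =
    (\prod_(x : Tb N) qb alpha beta x (bv z x))%:E.
Proof.
move=> hUV k z.
have -> : [set om | (U k om, V k om) = z] =
   \bigcap_(k' in [set` [:: k]]) [set om | (U k' om, V k' om) = (fun _ => z) k'].
  apply/seteqP; split => om /=.
    by move=> H k' /= hk; move: hk H; rewrite inE => /eqP ->.
  by move=> H; apply: H; rewrite /= inE.
split; last by rewrite (@key_law R d Omega P N alpha beta U V hUV) // big_seq1.
rewrite set_eq; apply: fin_bigcap_measurable; first exact: finite_seq.
move=> idx _; exact: (hUV.1 idx).
Qed.
Lemma sigma_gen_map (d : measure_display) (Omega : measurableType d)
  (T T' : finType) (f : T -> T') (Z : nat -> Omega -> T) k A :
  sigma_gen (fun k om => f (Z k om)) k A -> sigma_gen Z k A.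
Proof.
move=> [B ->].
exists (finset (fun phi : {ffun 'I_k.+1 -> T} => [ffun i : 'I_k.+1 => f (phi i)] \in B)).
apply/seteqP; split => om /=; rewrite inE;
  suff -> : [ffun i : 'I_k.+1 => f ([ffun i0 : 'I_k.+1 => Z i0 om] i)] =
            [ffun i : 'I_k.+1 => f (Z i om)] by [].
all: by apply/ffunP => i; rewrite !ffunE.
Qed.

Lemma sigma_gen_bij (d : measure_display) (Omega : measurableType d)
  (T T' : finType) (f : T -> T') (Z : nat -> Omega -> T) k A :
  bijective f ->
  sigma_gen (fun k om => f (Z k om)) k A <-> sigma_gen Z k A.
Proof.
move=> [g fK gK]; split; first exact: sigma_gen_map.
move=> H; apply: (@sigma_gen_map _ _ _ _ g).
have -> : (fun k om => g (f (Z k om))) = Z by apply/funext=> k'; apply/funext=> om; rewrite fK.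
exact: H.
Qed.

Lemma meas_wrt_bij (d : measure_display) (Omega : measurableType d)
  (T T' : finType) (F : set (set Omega)) (f : T -> T') (X : Omega -> T) :
  bijective f -> measurable_wrt F (fun om => f (X om)) <-> measurable_wrt F X.
Proof.
move=> [g fK gK]; split => H y.
- have := H (f y).
  suff -> : [set om | f (X om) = f y] = [set om | X om = y] by [].
  apply/seteqP; split => om /= h; last by rewrite h.
  by rewrite -(fK (X om)) h fK.
- have := H (g y).
  suff -> : [set om | f (X om) = y] = [set om | X om = g y] by [].
  apply/seteqP; split => om /= h; first by rewrite -h fK.
  by rewrite h gK.
Qed.

Arguments bit_law {R d Omega P N alpha beta U V}.
Arguments key_law {R d Omega P N alpha beta U V}.
Arguments single_meas {R d Omega P N alpha beta U V}.
Arguments meas_wrt_bij {d Omega T T' F f X}.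
Arguments sigma_gen_bij {d Omega T T' f} Z {k A}.

Definition Fof {N : nat} (f : {ffun Tb N -> bool}) : sir_noise N :=
  ([ffun i => [ffun j => f (inl (i, j))]], [ffun i => f (inr i)]).

Lemma bv_Fof N (f : {ffun Tb N -> bool}) x : bv (Fof f) x = f x.
Proof. by case: x => [[i j]|i]; rewrite /= !ffunE. Qed.

Lemma Fof_bij N : bijective (@Fof N).
Proof.
exists (fun z => [ffun x => bv z x]).
  by move=> f; apply/ffunP => x; rewrite ffunE bv_Fof.
move=> [u v]; rewrite /Fof; congr pair; apply/ffunP => i; rewrite ffunE //.
by apply/ffunP => j; rewrite ffunE ffunE.
by rewrite ffunE.
Qed.

Theorem theorem3 (R : realType) (d : measure_display) (Omega : measurableType d)
    (P : probability Omega R) (kappa N : nat) (W : rel 'I_kappa) (alpha beta : R)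
    (halpha : 0 <= alpha <= 1) (hbeta : 0 <= beta <= 1)
    (U : nat -> Omega -> {ffun 'I_N -> {ffun 'I_N -> bool}})
    (V : nat -> Omega -> {ffun 'I_N -> bool})
    (hUV : sir_noise_assumptions P alpha beta U V) :
  exists (n h : nat) (E : 'I_h -> rel 'I_n) (mu : {ffun 'I_h -> R})
         (enc : sir_state N kappa -> 'I_n) (code : sir_noise N -> 'I_h),
    [/\ bijective enc, bijective code, prob_distr mu,
        iid_with_law P (fun k om => code (U k om, V k om)) mu &
        forall (s0 : sir_state N kappa) (X : nat -> Omega -> sir_state N kappa),
          sir_trajectory W U V s0 X <->
          stoch_path E (fun k om => code (U k om, V k om)) (enc s0)
                     (fun k om => enc (X k om))].
Proof.
pose E := fun (c : 'I_#|sir_noise N|) (x y : 'I_#|sir_state N kappa|) =>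
  [forall i, ((enum_val y).1 i == G i (enum_val x).1 (enum_val x).2
                 ((enum_val c).1 i) ((enum_val c).2 i))
             && W ((enum_val x).2 i) ((enum_val y).2 i)].
pose mu := [ffun c : 'I_#|sir_noise N| =>
              \prod_(x : Tb N) qb alpha beta x (bv (enum_val c) x)].
have bij_enc : bijective (@enum_rank (sir_state N kappa)).
  by exists enum_val; [exact: enum_rankK | exact: enum_valK].
have bij_code : bijective (@enum_rank (sir_noise N)).
  by exists enum_val; [exact: enum_rankK | exact: enum_valK].
have pre : forall k c, (fun om => enum_rank (U k om, V k om)) @^-1` [set c] =
    [set om | (U k om, V k om) = enum_val c].
  move=> k c; apply/seteqP; split => om /=.
    by move=> <-; rewrite enum_rankK.
  by move=> ->; rewrite enum_valK.
have law : forall k c, P ((fun om => enum_rank (U k om, V k om)) @^-1` [set c]) =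
    (mu c)%:E.
  by move=> k c; rewrite pre ffunE; case: (single_meas hUV k (enum_val c)).
exists #|sir_state N kappa|, #|sir_noise N|, E, mu, enum_rank, enum_rank.
split => //.
- split.
    move=> c; rewrite ffunE; apply: prodr_ge0 => x _.
    case/andP: halpha => a0 a1; case/andP: hbeta => b0 b1.
    by case: x => y; case: (bv _ _) => /=; rewrite ?subr_ge0.
  rewrite (reindex (@enum_rank (sir_noise N))) /=; last first.
    by apply: onW_bij; exact: bij_code.
  rewrite (reindex (@Fof N)) /=; last by apply: onW_bij; exact: Fof_bij.
  under eq_bigr => f _ do rewrite ffunE enum_rankK.
  under eq_bigr => f _ do under eq_bigr => x _ do rewrite bv_Fof.
  rewrite -bigA_distr_bigA /= big1 // => x _.
  by rewrite big_bool; case: x => _ /=; rewrite addrC subrK.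
- split; last split.
  + move=> k c; rewrite pre; exact: (single_meas hUV k (enum_val c)).1.
  + move=> s b us.
    rewrite (eq_bigcapr (G := fun i => [set om | (U i om, V i om) = enum_val (b i)])); last first.
      by move=> i _; rewrite pre.
    rewrite (key_law hUV s (fun i => enum_val (b i)) us).
    by apply: eq_bigr => i _; rewrite law ffunE.
  + exact: law.
- move=> s0 X; split.
  + move=> [h0 [h1 [h2 h3]]]; split; last split.
    * by move=> om; rewrite h0.
    * move=> k om; rewrite /E !enum_rankK; apply/forallP => i.
      by rewrite h1 eqxx h2.
    * move=> k; apply/(meas_wrt_bij bij_enc) => y.
      apply/(sigma_gen_bij (fun k om => (U k om, V k om) : sir_noise N) bij_code).
      exact: h3.
  + move=> [h0 [h1 h2]]; split; last split; last split.
    * by move=> om; apply: enum_rank_inj; rewrite h0.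
    * move=> k om i; have := h1 k om; rewrite /E !enum_rankK => /forallP /(_ i).
      by case/andP => /eqP.
    * move=> k om i; have := h1 k om; rewrite /E !enum_rankK => /forallP /(_ i).
      by case/andP.
    * move=> k y.
      apply/(sigma_gen_bij (fun k om => (U k om, V k om) : sir_noise N) bij_code).
      by have := h2 k; move/(meas_wrt_bij bij_enc); apply.
Qed.
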